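(* Let $\Diamond_{ij;kl}$ be a hinge of a geodesic triangulation of a hyperbolic polyhedral surface with circle radii $r_k,r_i,r_l,r_j>0$ and inversive distances $a=I_{ki},b=I_{il},c=I_{lj},d=I_{jk},e=I_{ij}>1$, and suppose the orthogonal circles of both faces $f_{ijk}$ and $f_{ijl}$ are compact. Then the edge $e_{ij}$ is local weighted Delaunay, i.e. $h_{ij,k}+h_{ij,l}\ge 0$, if and only if $$\frac{\sqrt{\Delta_{bce}}}{\tanh r_k}+\frac{\sqrt{\Delta_{ade}}}{\tanh r_l}\le\frac{\sqrt{\Delta_{cdf}}}{\tanh r_i}+\frac{\sqrt{\Delta_{abf}}}{\tanh r_j},$$ where $f=\dfrac{ab+cd+ace+bde+\sqrt{\Delta_{ade}}\sqrt{\Delta_{bce}}}{e^2-1}$.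
   Context: A hinge $\Diamond_{ij;kl}$ consists of an edge $e_{ij}$ with its two adjacent faces $f_{ijk},f_{ijl}$; lengths are $l_{\alpha\beta}=\operatorname{arccosh}(\cosh r_\alpha\cosh r_\beta+I_{\alpha\beta}\sinh r_\alpha\sinh r_\beta)$. $\Delta_{abc}=a^2+b^2+c^2+2abc-1$. Orthogonal circle of a face: develop the face isometrically into the Poincaré disk $\mathbb D$; the vertex circles are Euclidean circles and the orthogonal circle is the unique Euclidean circle orthogonal to all three; it is compact if contained in $\mathbb D$, and then it is a hyperbolic circle with center $O_{ijk}$ and radius $\rho_{ijk}$ with $\cosh d(O_{ijk},v_\alpha)=\cosh r_\alpha\cosh\rho_{ijk}$, $\alpha=i,j,k$. $h_{ij,k}$ is the hyperbolic distance from $O_{ijk}$ to the geodesic containing $e_{ij}$, taken positive if $O_{ijk}$ and $v_k$ are on the same side of $e_{ij}$ and negative otherwise (computed in a local development). The edge $e_{ij}$ is local weighted Delaunay if $h_{ij,k}+h_{ij,l}\ge0$. *)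

(* Defs.v *)
From HB Require Import structures.
From mathcomp Require Import all_boot all_order all_algebra.
From mathcomp Require Import all_classical all_reals.
From mathcomp Require Import sequences exp.
Set Implicit Arguments. Unset Strict Implicit. Unset Printing Implicit Defensive.
Import Order.TTheory GRing.Theory Num.Theory.
Local Open Scope classical_set_scope.
Local Open Scope ring_scope.

Section Hyp.
Variable R : realType.

Definition coshR (x : R) : R := (expR x + expR (- x)) / 2.
Definition sinhR (x : R) : R := (expR x - expR (- x)) / 2.
Definition tanhR (x : R) : R := sinhR x / coshR x.
Definition arcoshR (y : R) : R := ln (y + Num.sqrt (y ^+ 2 - 1)).

Record vec3 := V3 { c0 : R; c1 : R; c2 : R }.

Definition lor (p q : vec3) : R := - c0 p * c0 q + c1 p * c1 q + c2 p * c2 q.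

(* upper sheet of the hyperboloid = hyperbolic plane H^2 *)
Definition inH2 (p : vec3) : Prop := lor p p = -1 /\ 0 < c0 p.

Definition hdist (p q : vec3) : R := arcoshR (- lor p q).

Definition det3 (p q s : vec3) : R :=
  c0 p * (c1 q * c2 s - c2 q * c1 s)
  - c0 q * (c1 p * c2 s - c2 p * c1 s)
  + c0 s * (c1 p * c2 q - c2 p * c1 q).

(* the geodesic through vi, vj : H^2 intersected with span(vi, vj) *)
Definition onGeod (vi vj q : vec3) : Prop :=
  inH2 q /\ exists s t : R,
    [/\ c0 q = s * c0 vi + t * c0 vj, c1 q = s * c1 vi + t * c1 vj
      & c2 q = s * c2 vi + t * c2 vj].

Definition distGeod (vi vj p : vec3) : R :=
  inf [set hdist p q | q in onGeod vi vj].

(* signed distance h_{ij,k} from O to the geodesic e_ij: positive when O and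
   vk lie on the same side (the side of a point x is the sign of det[vi vj x]) *)
Definition hsigned (vi vj vk O : vec3) : R :=
  (if 0 <= det3 vi vj O * det3 vi vj vk then 1 else -1) * distGeod vi vj O.

Definition elen (r1 r2 I : R) : R :=
  arcoshR (coshR r1 * coshR r2 + I * sinhR r1 * sinhR r2).

Definition Delta (a b c : R) : R := a ^+ 2 + b ^+ 2 + c ^+ 2 + 2 * a * b * c - 1.

(* O, rho : center and radius of the (compact) orthogonal circle of the face
   with vertices v1 v2 v3 and vertex-circle radii r1 r2 r3 *)
Definition orthCircle (v1 v2 v3 : vec3) (r1 r2 r3 : R) (O : vec3) (rho : R) : Prop :=
  [/\ inH2 O, 0 < rho,
      coshR (hdist O v1) = coshR r1 * coshR rho,
      coshR (hdist O v2) = coshR r2 * coshR rho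
    & coshR (hdist O v3) = coshR r3 * coshR rho].

End Hyp.

(* Main.v *)
Require Import Defs.
From HB Require Import structures.
From mathcomp Require Import all_boot all_order all_algebra.
From mathcomp Require Import all_classical all_reals.
From mathcomp Require Import sequences exp.
From mathcomp Require Import ring lra.
Import Order.TTheory GRing.Theory Num.Theory.
Local Open Scope ring_scope.

Lemma coshE {R : realType} (x : R) : coshR x = (expR x + (expR x)^-1) / 2.
Proof. by rewrite /coshR expRN. Qed.
Lemma sinhE {R : realType} (x : R) : sinhR x = (expR x - (expR x)^-1) / 2.
Proof. by rewrite /sinhR expRN. Qed.

Lemma inv_eq {R : realType} (u v : R) : u * v = 1 -> u^-1 = v.
Proof. move=> h. have u0 : u != 0 by apply/eqP=> u0; move: h; rewrite u0 mul0r => /eqP; rewrite eq_sym oner_eq0.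
by apply: (mulfI u0); rewrite mulfV. Qed.

Lemma cosh_arcosh {R : realType} (y : R) : 1 <= y -> coshR (arcoshR y) = y.
Proof.
move=> y1; rewrite coshE /arcoshR.
set s := Num.sqrt (y ^+ 2 - 1).
have s0 : 0 <= s by apply: sqrtr_ge0.
have ss : s ^+ 2 = y ^+ 2 - 1 by rewrite sqr_sqrtr // subr_ge0; nra.
have z0 : 0 < y + s by lra.
rewrite lnK; last by rewrite posrE.
rewrite (@inv_eq _ _ (y - s)); first lra.
rewrite -[_ * _]/((y+s)*(y-s)). nra.
Qed.

Lemma arcosh_le {R : realType} (y z : R) : 1 <= y -> y <= z -> arcoshR y <= arcoshR z.
Proof.
move=> y1 yz; rewrite /arcoshR ler_ln ?posrE; last 2 first.
- have := sqrtr_ge0 (y^+2-1); lra.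
- have := sqrtr_ge0 (z^+2-1); lra.
apply: lerD => //; rewrite ler_sqrt; nra.
Qed.

Lemma arcosh_lt {R : realType} (y z : R) : 1 <= y -> y < z -> arcoshR y < arcoshR z.
Proof.
move=> y1 yz; rewrite /arcoshR ltr_ln ?posrE; last 2 first.
- have := sqrtr_ge0 (y^+2-1); lra.
- have := sqrtr_ge0 (z^+2-1); lra.
apply: ltr_leD => //; rewrite ler_sqrt; nra.
Qed.

Lemma arcosh1 {R : realType} : arcoshR (1 : R) = 0.
Proof. by rewrite /arcoshR expr1n subrr sqrtr0 addr0 ln1. Qed.

Definition Wv {R : realType} (p q : vec3 R) : vec3 R :=
  V3 (- (c1 p * c2 q - c2 p * c1 q)) (c0 q * c2 p - c0 p * c2 q) (c0 p * c1 q - c0 q * c1 p).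

Definition det33 {R : realType} (a11 a12 a13 a21 a22 a23 a31 a32 a33 : R) : R :=
  a11 * (a22 * a33 - a23 * a32) - a12 * (a21 * a33 - a23 * a31) + a13 * (a21 * a32 - a22 * a31).

Lemma det_lor {R : realType} (p q s : vec3 R) : det3 p q s = lor (Wv p q) s.
Proof. case: p q s => [? ? ?] [? ? ?] [? ? ?]; rewrite /det3 /lor /=; ring. Qed.

Lemma lorC {R : realType} (p q : vec3 R) : lor p q = lor q p.
Proof. case: p q => [? ? ?] [? ? ?]; rewrite /lor /=; ring. Qed.

Lemma W_p {R : realType} (p q : vec3 R) : lor (Wv p q) p = 0.
Proof. case: p q => [? ? ?] [? ? ?]; rewrite /lor /=; ring. Qed.
Lemma W_q {R : realType} (p q : vec3 R) : lor (Wv p q) q = 0.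
Proof. case: p q => [? ? ?] [? ? ?]; rewrite /lor /=; ring. Qed.

Lemma W_W {R : realType} (p q : vec3 R) :
  lor (Wv p q) (Wv p q) = lor p q ^+ 2 - lor p p * lor q q.
Proof. case: p q => [? ? ?] [? ? ?]; rewrite /lor /=; ring. Qed.

Lemma gram3 {R : realType} (p q x s : vec3 R) :
  det3 p q x * det3 p q s = - det33 (lor p p) (lor p q) (lor p s)
                                    (lor q p) (lor q q) (lor q s)
                                    (lor x p) (lor x q) (lor x s).
Proof. case: p q x s => [? ? ?] [? ? ?] [? ? ?] [? ? ?]; rewrite /det3 /det33 /lor /=; ring. Qed.

Definition det44 {R : realType} (a b c d e f g h i j k l m n o p : R) : R :=
  a * det33 f g h j k l n o p - b * det33 e g h i k l m o p
  + c * det33 e f h i j l m n p - d * det33 e f g i j k m n o.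

Lemma gram4 {R : realType} (p q s x : vec3 R) :
  det44 (lor p p) (lor p q) (lor p s) (lor p x)
        (lor q p) (lor q q) (lor q s) (lor q x)
        (lor s p) (lor s q) (lor s s) (lor s x)
        (lor x p) (lor x q) (lor x s) (lor x x) = 0.
Proof. case: p q s x => [? ? ?] [? ? ?] [? ? ?] [? ? ?]; rewrite /det44 /det33 /lor /=; ring. Qed.

Lemma decomp {R : realType} (p q x : vec3 R) :
  let w := lor (Wv p q) (Wv p q) in
  let al := - (lor q q * lor x p - lor p q * lor x q) in
  let be := - (lor p p * lor x q - lor p q * lor x p) in
  let ga := lor (Wv p q) x in
  [/\ w * c0 x = al * c0 p + be * c0 q + ga * c0 (Wv p q),
      w * c1 x = al * c1 p + be * c1 q + ga * c1 (Wv p q) &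
      w * c2 x = al * c2 p + be * c2 q + ga * c2 (Wv p q)].
Proof. case: p q x => [? ? ?] [? ? ?] [? ? ?]; rewrite /lor /=; split; ring. Qed.

Definition vlin {R : realType} (a : R) (u : vec3 R) (b : R) (v : vec3 R) : vec3 R :=
  V3 (a * c0 u + b * c0 v) (a * c1 u + b * c1 v) (a * c2 u + b * c2 v).

Lemma lor_linl {R : realType} a (u : vec3 R) b v x :
  lor (vlin a u b v) x = a * lor u x + b * lor v x.
Proof. case: u v x => [? ? ?] [? ? ?] [? ? ?]; rewrite /lor /=; ring. Qed.
Lemma lor_linr {R : realType} a (u : vec3 R) b v x :
  lor x (vlin a u b v) = a * lor x u + b * lor x v.
Proof. case: u v x => [? ? ?] [? ? ?] [? ? ?]; rewrite /lor /=; ring. Qed.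

Lemma H2_lor {R : realType} (p q : vec3 R) : inH2 p -> inH2 q -> 1 <= - lor p q.
Proof.
case: p q => [p0 p1 p2] [q0 q1 q2]; rewrite /inH2 /lor /= => [[hp p0g]] [hq q0g].
set u := p1 * q1 + p2 * q2.
have h1 : (p0 * q0) ^+ 2 - (1 + u) ^+ 2 = (p1 - q1) ^+ 2 + (p2 - q2) ^+ 2 + (p1 * q2 - p2 * q1) ^+ 2.
  have ep : p0 ^+ 2 = 1 + p1 ^+ 2 + p2 ^+ 2 by lra.
  have eq : q0 ^+ 2 = 1 + q1 ^+ 2 + q2 ^+ 2 by lra.
  by rewrite exprMn ep eq /u; ring.
have h2 : (1 + u) ^+ 2 <= (p0 * q0) ^+ 2.
  have : 0 <= (p1 - q1) ^+ 2 + (p2 - q2) ^+ 2 + (p1 * q2 - p2 * q1) ^+ 2 by rewrite !addr_ge0 // sqr_ge0.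
  lra.
have h3 : 0 < p0 * q0 by nra.
have : 1 + u <= p0 * q0.
  case: (lerP (1 + u) 0) => h; first lra.
  by rewrite -(ler_pXn2r (n := 2)) // ?nnegrE; lra.
rewrite /u; lra.
Qed.

Lemma one_le_sqrt {R : realType} (x : R) : 1 <= x -> 1 <= Num.sqrt x.
Proof. by move=> h; rewrite -sqrtr1 ler_sqrt //; lra. Qed.

Lemma distGeod_val {R : realType} (vi vj O : vec3 R) :
  inH2 vi -> inH2 vj -> inH2 O -> 0 < lor (Wv vi vj) (Wv vi vj) ->
  distGeod vi vj O =
  arcoshR (Num.sqrt (1 + (det3 vi vj O) ^+ 2 / lor (Wv vi vj) (Wv vi vj))).
Proof.
move=> hi hj hO w0.
set W := Wv vi vj; set w := lor W W; set D := det3 vi vj O.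
set m := Num.sqrt (1 + D ^+ 2 / w).
have Dw : 0 <= D ^+ 2 / w by rewrite divr_ge0 // ?sqr_ge0 // ltW.
have m1 : 1 <= m by apply: one_le_sqrt; lra.
have hm2 : m ^+ 2 = 1 + D ^+ 2 / w by rewrite sqr_sqrtr //; lra.
have DW : lor W O = D by rewrite /D det_lor.
have OO : lor O O = -1 by case: hO.
have lb : forall q, onGeod vi vj q -> arcoshR m <= hdist O q.
  move=> q [hq [s [t [e0 e1 e2]]]].
  have Wq : lor W q = 0.
    have -> : lor W q = s * lor W vi + t * lor W vj by rewrite /lor e0 e1 e2; ring.
    by rewrite /W W_p W_q; ring.
  have qq : lor q q = -1 by case: hq.
  have g := gram3 O q W W.
  rewrite /det33 OO qq (lorC q W) Wq (lorC O W) DW (lorC q O) -/w in g.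
  set L := lor O q in g *.
  have g2 : 0 <= (L ^+ 2 - 1) * w - D ^+ 2.
    have : 0 <= det3 O q W * det3 O q W by rewrite -expr2 sqr_ge0.
    rewrite g; lra.
  have L2 : 1 + D ^+ 2 / w <= L ^+ 2.
    have : D ^+ 2 / w <= L ^+ 2 - 1 by rewrite ler_pdivrMr //; lra.
    lra.
  have hL : 1 <= - L by apply: H2_lor.
  rewrite /hdist -/L; apply: arcosh_le => //.
  rewrite /m -(ger0_norm (x := - L)); last lra.
  by rewrite -sqrtr_sqr sqrrN ler_sqrt //; nra.
have w0' : w != 0 by rewrite gt_eqF.
have m0 : 0 < m by lra.
set al := - (lor vj vj * lor O vi - lor vi vj * lor O vj).
set be := - (lor vi vi * lor O vj - lor vi vj * lor O vi).
have [hd0 hd1 hd2] : [/\ w * c0 O = al * c0 vi + be * c0 vj + D * c0 W,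
      w * c1 O = al * c1 vi + be * c1 vj + D * c1 W &
      w * c2 O = al * c2 vi + be * c2 vj + D * c2 W].
  by rewrite /D det_lor; exact: decomp.
set P := vlin 1 O (- (D / w)) W.
have PP : lor P P = - m ^+ 2.
  rewrite /P lor_linl !lor_linr OO (lorC O W) DW -/w hm2; field; exact: w0'.
have OP : lor O P = - m ^+ 2.
  rewrite /P lor_linr OO (lorC O W) DW hm2; field; exact: w0'.
have cP : c0 P != 0.
  apply/eqP => cP0; move: PP; rewrite {1}/lor cP0 => h.
  have : 0 <= c1 P * c1 P + c2 P * c2 P by rewrite -!expr2 addr_ge0 // sqr_ge0.
  have : 0 < m ^+ 2 by rewrite exprn_gt0.
  lra.
set k := if 0 < c0 P then m^-1 else - m^-1.
have km : k * m = 1 \/ k * m = -1.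
  rewrite /k; case: ifP => _; [left|right]; field; rewrite gt_eqF //.
have kc : 0 < k * c0 P.
  rewrite /k; case: ifP => h.
    by rewrite mulr_gt0 // invr_gt0.
  rewrite mulNr -mulrN mulr_gt0 ?invr_gt0 // oppr_gt0.
  by rewrite lt_neqAle cP /= leNgt h.
set q0 := vlin k P 0 P.
have q0H : inH2 q0.
  split; last by rewrite /q0 /= mul0r addr0.
  rewrite /q0 (lor_linl k P 0 P) (@lor_linr _ k P 0 P) PP.
  have -> : k * (k * - m ^+ 2 + 0 * - m ^+ 2) + 0 * (k * - m ^+ 2 + 0 * - m ^+ 2) = - (k * m) ^+ 2 by ring.
  by case: km => ->; rewrite ?expr1n ?sqrrN ?expr1n.
have q0G : onGeod vi vj q0.
  split => //; exists (k * al / w), (k * be / w).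
  have eO0 : c0 O = (al * c0 vi + be * c0 vj + D * c0 W) / w by rewrite -hd0; field.
  have eO1 : c1 O = (al * c1 vi + be * c1 vj + D * c1 W) / w by rewrite -hd1; field.
  have eO2 : c2 O = (al * c2 vi + be * c2 vj + D * c2 W) / w by rewrite -hd2; field.
  clearbody W; rewrite /q0 /P /= eO0 eO1 eO2; split; field; exact: w0'.
have Oq0 : - lor O q0 = m.
  have h1 := @H2_lor _ _ _ hO q0H.
  move: h1; rewrite /q0 lor_linr OP mul0r addr0.
  case: km => h.
    have -> : k = m^-1 by apply: (mulIf (x := m)); rewrite ?gt_eqF // mulVf ?gt_eqF.
    move=> _; field; rewrite gt_eqF //.
  have -> : k = - m^-1 by apply: (mulIf (x := m)); rewrite ?gt_eqF // mulNr mulVf ?gt_eqF.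
  have -> : - (- m^-1 * - m ^+ 2) = - m by field; rewrite gt_eqF.
  lra.
rewrite /distGeod; apply/le_anti/andP; split.
- have hl : has_lbound [set hdist O q | q in onGeod vi vj].
    exists (arcoshR m) => y [q hq <-]; exact: lb.
  apply: (ge_inf hl); exists q0 => //; by rewrite /hdist Oq0.
- have ne : ([set hdist O q | q in onGeod vi vj] !=set0)%classic.
    by exists (arcoshR m), q0 => //; by rewrite /hdist Oq0.
  have lbm : lbound [set hdist O q | q in onGeod vi vj] (arcoshR m).
    move=> y [q hq <-]; exact: lb.
  exact: (lb_le_inf ne lbm).
Qed.

Definition Phi {R : realType} (w x : R) := arcoshR (Num.sqrt (1 + x ^+ 2 / w)).
Definition Gf {R : realType} (w x : R) := (if 0 <= x then 1 else -1) * Phi w x.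

Lemma Phi_lt {R : realType} (w x y : R) : 0 < w -> x ^+ 2 < y ^+ 2 -> Phi w x < Phi w y.
Proof.
move=> w0 xy; rewrite /Phi; apply: arcosh_lt.
  apply: one_le_sqrt; have : 0 <= x ^+ 2 / w by rewrite divr_ge0 ?sqr_ge0 // ltW.
  lra.
rewrite ltr_sqrt; last first.
  have : 0 <= x ^+ 2 / w by rewrite divr_ge0 ?sqr_ge0 // ltW.
  have : x ^+ 2 / w < y ^+ 2 / w by rewrite ltr_pM2r // invr_gt0.
  lra.
by rewrite ltrD2l ltr_pM2r // invr_gt0.
Qed.

Lemma Phi0 {R : realType} (w : R) : Phi w 0 = 0.
Proof. by rewrite /Phi expr0n /= mul0r addr0 sqrtr1 arcosh1. Qed.

Lemma PhiN {R : realType} (w x : R) : Phi w (- x) = Phi w x.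
Proof. by rewrite /Phi sqrrN. Qed.

Lemma Gf_lt {R : realType} (w x y : R) : 0 < w -> x < y -> Gf w x < Gf w y.
Proof.
move=> w0 xy; rewrite /Gf.
case: (lerP 0 x) => hx; case: (lerP 0 y) => hy.
- rewrite !mul1r; apply: Phi_lt => //; nra.
- lra.
- rewrite mul1r mulN1r.
  have h0 : Phi w 0 < Phi w x by apply: Phi_lt => //; nra.
  have h1 : Phi w 0 <= Phi w y.
    case: (eqVneq y 0) => [->|yn]; first lra.
    by apply/ltW/Phi_lt => //; rewrite expr0n /= exprn_even_gt0.
  rewrite Phi0 in h0 h1; lra.
- rewrite !mulN1r ltrN2; apply: Phi_lt => //; nra.
Qed.

Lemma Gf_le {R : realType} (w x y : R) : 0 < w -> (Gf w x <= Gf w y) = (x <= y).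
Proof.
move=> w0; apply/idP/idP => h.
  by rewrite leNgt; apply/negP => /(Gf_lt w y x w0); rewrite ltNge h.
case: (eqVneq x y) => [->//|ne]; apply/ltW/Gf_lt => //. by rewrite lt_neqAle ne h.
Qed.

Lemma GfN {R : realType} (w x : R) : Gf w (- x) = - Gf w x.
Proof.
rewrite /Gf PhiN; case: ifP => h1; case: ifP => h2.
- have -> : x = 0 by lra.
  by rewrite Phi0; ring.
- ring.
- ring.
- move/negbT: h1; move/negbT: h2; rewrite -!ltNge => h1 h2; lra.
Qed.

Lemma Gf_sum {R : realType} (w x y : R) : 0 < w -> (0 <= Gf w x + Gf w y) = (0 <= x + y).
Proof.
move=> w0; rewrite -[Gf w y]opprK -GfN subr_ge0 Gf_le //; apply/idP/idP; lra.
Qed.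

Lemma hsigned_G {R : realType} (vi vj vk O : vec3 R) :
  inH2 vi -> inH2 vj -> inH2 O -> 0 < lor (Wv vi vj) (Wv vi vj) -> det3 vi vj vk != 0 ->
  hsigned vi vj vk O =
  Gf (lor (Wv vi vj) (Wv vi vj))
     (det3 vi vj O * det3 vi vj vk / `|det3 vi vj vk|).
Proof.
move=> hi hj hO w0 dn; rewrite /hsigned (@distGeod_val _ _ _ _ hi hj hO w0) /Gf.
set D := det3 vi vj O; set d := det3 vi vj vk.
have ad : 0 < `|d| by rewrite normr_gt0.
have -> : Phi (lor (Wv vi vj) (Wv vi vj)) (D * d / `|d|) =
          Phi (lor (Wv vi vj) (Wv vi vj)) D.
  rewrite /Phi; congr (arcoshR (Num.sqrt (1 + _ / _))).
  by rewrite !exprMn exprVn -normrX ger0_norm ?sqr_ge0 // mulfK // expf_neq0.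
have -> : (0 <= D * d / `|d|) = (0 <= D * d) by rewrite pmulr_lge0 // invr_gt0.
by [].
Qed.

Definition Qf {R : realType} (xi xj xk p q r : R) : R :=
  xi ^+ 2 * (1 - r ^+ 2) + xj ^+ 2 * (1 - q ^+ 2) + xk ^+ 2 * (1 - p ^+ 2)
  + 2 * xi * xj * (q * r - p) + 2 * xi * xk * (p * r - q) + 2 * xj * xk * (p * q - r).

Definition Lf {R : realType} (xi xj xk si sj sk a d e : R) : R :=
  xi * sj * sk * (a + d * e) + si * xj * sk * (d + a * e) - si * sj * xk * (e ^+ 2 - 1).

Definition Mf {R : realType} (xi xj si sj e : R) : R :=
  xi ^+ 2 * sj ^+ 2 + 2 * e * xi * si * xj * sj + xj ^+ 2 * si ^+ 2.

Lemma alg_K {R : realType} (Ei Ej Ek a d e : R) : Ei != 0 -> Ej != 0 -> Ek != 0 ->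
  let xi := (Ei + Ei^-1) / 2 in let xj := (Ej + Ej^-1) / 2 in let xk := (Ek + Ek^-1) / 2 in
  let si := (Ei - Ei^-1) / 2 in let sj := (Ej - Ej^-1) / 2 in let sk := (Ek - Ek^-1) / 2 in
  let p := xi * xj + e * si * sj in let q := xk * xi + a * sk * si in
  let r := xj * xk + d * sj * sk in
  det33 1 p q p 1 r xi xj xk = si * sj * Lf xi xj xk si sj sk a d e.
Proof. move=> hi hj hk /=; rewrite /det33 /Lf; field; by rewrite ?hi ?hj ?hk. Qed.

Lemma alg_Q {R : realType} (Ei Ej Ek a d e : R) : Ei != 0 -> Ej != 0 -> Ek != 0 ->
  let xi := (Ei + Ei^-1) / 2 in let xj := (Ej + Ej^-1) / 2 in let xk := (Ek + Ek^-1) / 2 in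
  let si := (Ei - Ei^-1) / 2 in let sj := (Ej - Ej^-1) / 2 in let sk := (Ek - Ek^-1) / 2 in
  let p := xi * xj + e * si * sj in let q := xk * xi + a * sk * si in
  let r := xj * xk + d * sj * sk in
  (e ^+ 2 - 1) * Qf xi xj xk p q r =
  Delta a d e * sk ^+ 2 * Mf xi xj si sj e - (Lf xi xj xk si sj sk a d e) ^+ 2.
Proof. move=> hi hj hk /=; rewrite /Qf /Lf /Mf /Delta; field; by rewrite ?hi ?hj ?hk. Qed.

Lemma gramK {R : realType} (p q r xi xj xk X : R) :
  - det33 (-1) (-p) (-q) (-p) (-1) (-r) (- (xi * X)) (- (xj * X)) (- (xk * X))
  = X * det33 1 p q p 1 r xi xj xk.
Proof. rewrite /det33; ring. Qed.

Lemma gramG {R : realType} (p q r : R) :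
  - det33 (-1) (-p) (-q) (-p) (-1) (-r) (-q) (-r) (-1) = det33 1 p q p 1 r q r 1.
Proof. rewrite /det33; ring. Qed.

Lemma gram4v {R : realType} (p q r xi xj xk X : R) :
  det44 (-1) (-p) (-q) (- (xi * X)) (-p) (-1) (-r) (- (xj * X))
        (-q) (-r) (-1) (- (xk * X)) (- (xi * X)) (- (xj * X)) (- (xk * X)) (-1)
  = det33 1 p q p 1 r q r 1 - X ^+ 2 * Qf xi xj xk p q r.
Proof. rewrite /det44 /det33 /Qf; ring. Qed.

Lemma Delta_ge0 {R : realType} (x y z : R) : 1 <= x -> 0 <= y -> 0 <= z -> 0 <= Delta x y z.
Proof.
move=> hx hy hz; rewrite /Delta.
have : 0 <= x * y * z by rewrite !mulr_ge0 //; lra.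
have : 0 <= y ^+ 2 by apply: sqr_ge0.
have : 0 <= z ^+ 2 by apply: sqr_ge0.
have : 1 <= x ^+ 2 by rewrite expr_ge1 //; lra.
lra.
Qed.

Lemma Delta_gt0 {R : realType} (x y z : R) : 1 < x -> 1 < y -> 1 < z -> 0 < Delta x y z.
Proof.
move=> hx hy hz; rewrite /Delta.
have : 0 <= x * y * z by rewrite !mulr_ge0 //; lra.
have : 0 <= y ^+ 2 by apply: sqr_ge0.
have : 0 <= z ^+ 2 by apply: sqr_ge0.
have : 1 < x ^+ 2 by rewrite expr_gt1 //; lra.
lra.
Qed.

Lemma I1 {R : realType} (a b c d e : R) : 1 < a -> 1 < b -> 1 < c -> 1 < d -> 1 < e ->
  let f := (a * b + c * d + a * c * e + b * d * e
            + Num.sqrt (Delta a d e) * Num.sqrt (Delta b c e)) / (e ^+ 2 - 1) in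
  (a + d * e) * Num.sqrt (Delta b c e) + (b + c * e) * Num.sqrt (Delta a d e)
  = (e ^+ 2 - 1) * Num.sqrt (Delta c d f).
Proof.
move=> ha hb hc hd he f.
have Dk : 0 <= Delta a d e by apply: Delta_ge0; lra.
have Dl : 0 <= Delta b c e by apply: Delta_ge0; lra.
set sk := Num.sqrt (Delta a d e) in f *; set sl := Num.sqrt (Delta b c e) in f *.
have sk0 : 0 <= sk by apply: sqrtr_ge0.
have sl0 : 0 <= sl by apply: sqrtr_ge0.
have hsk : sk ^+ 2 = Delta a d e by rewrite sqr_sqrtr.
have hsl : sl ^+ 2 = Delta b c e by rewrite sqr_sqrtr.
have e1 : 0 < e ^+ 2 - 1 by nra.
have f0 : 0 <= f by rewrite /f divr_ge0 ?(ltW e1) // !addr_ge0 ?mulr_ge0 //; lra.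
have Df : 0 <= Delta c d f by apply: Delta_ge0; lra.
have lhs0 : 0 <= (a + d * e) * sl + (b + c * e) * sk by rewrite addr_ge0 // mulr_ge0 //; nra.
apply: (@pexpIrn _ 2) => //; rewrite ?nnegrE //; first by rewrite mulr_ge0 ?sqrtr_ge0 // ltW.
rewrite exprMn sqr_sqrtr //.
have ne : e ^+ 2 - 1 != 0 by rewrite gt_eqF.
have E1 : (e ^+ 2 - 1) ^+ 2 * Delta c d f = (e ^+ 2 - 1) ^+ 2 * (c ^+ 2 + d ^+ 2 - 1)
   + ((a * b + c * d + a * c * e + b * d * e) + sk * sl) ^+ 2 + 2 * c * d * (e ^+ 2 - 1) * ((a * b + c * d + a * c * e + b * d * e) + sk * sl).
  by rewrite /Delta /f; field.
have E3 : ((a * b + c * d + a * c * e + b * d * e) + sk * sl) ^+ 2 = (a * b + c * d + a * c * e + b * d * e) ^+ 2 + 2 * (a * b + c * d + a * c * e + b * d * e) * (sk * sl) + sk ^+ 2 * sl ^+ 2 by ring.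
have E2 : ((a + d * e) * sl + (b + c * e) * sk) ^+ 2 =
  (a + d * e) ^+ 2 * sl ^+ 2 + (b + c * e) ^+ 2 * sk ^+ 2 + 2 * (a + d * e) * (b + c * e) * (sk * sl) by ring.
rewrite E1 E2 E3 hsk hsl /Delta; ring.
Qed.

Lemma I2 {R : realType} (a b c d e : R) : 1 < a -> 1 < b -> 1 < c -> 1 < d -> 1 < e ->
  let f := (a * b + c * d + a * c * e + b * d * e
            + Num.sqrt (Delta a d e) * Num.sqrt (Delta b c e)) / (e ^+ 2 - 1) in
  (d + a * e) * Num.sqrt (Delta b c e) + (c + b * e) * Num.sqrt (Delta a d e)
  = (e ^+ 2 - 1) * Num.sqrt (Delta a b f).
Proof.
move=> ha hb hc hd he f.
have Dk : 0 <= Delta a d e by apply: Delta_ge0; lra.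
have Dl : 0 <= Delta b c e by apply: Delta_ge0; lra.
set sk := Num.sqrt (Delta a d e) in f *; set sl := Num.sqrt (Delta b c e) in f *.
have sk0 : 0 <= sk by apply: sqrtr_ge0.
have sl0 : 0 <= sl by apply: sqrtr_ge0.
have hsk : sk ^+ 2 = Delta a d e by rewrite sqr_sqrtr.
have hsl : sl ^+ 2 = Delta b c e by rewrite sqr_sqrtr.
have e1 : 0 < e ^+ 2 - 1 by nra.
have f0 : 0 <= f by rewrite /f divr_ge0 ?(ltW e1) // !addr_ge0 ?mulr_ge0 //; lra.
have Df : 0 <= Delta a b f by apply: Delta_ge0; lra.
have lhs0 : 0 <= (d + a * e) * sl + (c + b * e) * sk by rewrite addr_ge0 // mulr_ge0 //; nra.
apply: (@pexpIrn _ 2) => //; rewrite ?nnegrE //; first by rewrite mulr_ge0 ?sqrtr_ge0 // ltW.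
rewrite exprMn sqr_sqrtr //.
have ne : e ^+ 2 - 1 != 0 by rewrite gt_eqF.
have E1 : (e ^+ 2 - 1) ^+ 2 * Delta a b f = (e ^+ 2 - 1) ^+ 2 * (a ^+ 2 + b ^+ 2 - 1)
   + ((a * b + c * d + a * c * e + b * d * e) + sk * sl) ^+ 2 + 2 * a * b * (e ^+ 2 - 1) * ((a * b + c * d + a * c * e + b * d * e) + sk * sl).
  by rewrite /Delta /f; field.
have E3 : ((a * b + c * d + a * c * e + b * d * e) + sk * sl) ^+ 2 = (a * b + c * d + a * c * e + b * d * e) ^+ 2 + 2 * (a * b + c * d + a * c * e + b * d * e) * (sk * sl) + sk ^+ 2 * sl ^+ 2 by ring.
have E2 : ((d + a * e) * sl + (c + b * e) * sk) ^+ 2 =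
  (d + a * e) ^+ 2 * sl ^+ 2 + (c + b * e) ^+ 2 * sk ^+ 2 + 2 * (d + a * e) * (c + b * e) * (sk * sl) by ring.
rewrite E1 E2 E3 hsk hsl /Delta; ring.
Qed.


Definition psi {R : realType} (M w : R) := w / Num.sqrt (M - w ^+ 2).

Lemma psiN {R : realType} (M w : R) : psi M (- w) = - psi M w.
Proof. by rewrite /psi sqrrN mulNr. Qed.

Lemma psi_lt0 {R : realType} (M w1 w2 : R) : w1 ^+ 2 < M -> w2 ^+ 2 < M ->
  0 <= w1 -> w1 < w2 -> psi M w1 < psi M w2.
Proof.
move=> h1 h2 p1 l12; rewrite /psi.
have a2 : 0 < Num.sqrt (M - w2 ^+ 2) by rewrite sqrtr_gt0; lra.
have a12 : Num.sqrt (M - w2 ^+ 2) < Num.sqrt (M - w1 ^+ 2) by rewrite ltr_sqrt; nra.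
have i12 : (Num.sqrt (M - w1 ^+ 2))^-1 < (Num.sqrt (M - w2 ^+ 2))^-1.
  by rewrite ltf_pV2 // ?posrE //; lra.
have i1 : 0 < (Num.sqrt (M - w1 ^+ 2))^-1 by rewrite invr_gt0; lra.
nra.
Qed.

Lemma psi_lt {R : realType} (M w1 w2 : R) : w1 ^+ 2 < M -> w2 ^+ 2 < M ->
  w1 < w2 -> psi M w1 < psi M w2.
Proof.
move=> h1 h2 l12.
case: (lerP 0 w1) => p1; first exact: psi_lt0.
case: (lerP w2 0) => p2.
  have := @psi_lt0 _ M (- w2) (- w1); rewrite !psiN !sqrrN => h; have : - psi M w2 < - psi M w1 by apply: h => //; lra.
  lra.
have n1 : psi M w1 < 0.
  rewrite /psi pmulr_llt0 // invr_gt0 sqrtr_gt0; lra.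
have n2 : 0 < psi M w2.
  rewrite /psi divr_gt0 // sqrtr_gt0; lra.
lra.
Qed.

Lemma psi_sum {R : realType} (M w1 w2 : R) : w1 ^+ 2 < M -> w2 ^+ 2 < M ->
  (0 <= psi M w1 + psi M w2) = (0 <= w1 + w2).
Proof.
move=> h1 h2; rewrite -[psi M w2]opprK -psiN subr_ge0.
have h2' : (- w2) ^+ 2 < M by rewrite sqrrN.
apply/idP/idP => h.
  rewrite leNgt; apply/negP => hl.
  have : psi M w1 < psi M (- w2) by apply: psi_lt => //; lra.
  lra.
case: (eqVneq (- w2) w1) => [->//|ne].
apply/ltW/psi_lt => //; rewrite lt_neqAle ne /=; lra.
Qed.

Lemma GL {R : realType} (A B D1 D2 M : R) : 0 < D1 -> 0 < D2 ->
  0 < D1 * M - A ^+ 2 -> 0 < D2 * M - B ^+ 2 ->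
  (0 <= A / Num.sqrt (D1 * M - A ^+ 2) + B / Num.sqrt (D2 * M - B ^+ 2))
  = (0 <= A * Num.sqrt D2 + B * Num.sqrt D1).
Proof.
move=> d1 d2 h1 h2.
have s1 : 0 < Num.sqrt D1 by rewrite sqrtr_gt0.
have s2 : 0 < Num.sqrt D2 by rewrite sqrtr_gt0.
have q1 : Num.sqrt D1 ^+ 2 = D1 by rewrite sqr_sqrtr // ltW.
have q2 : Num.sqrt D2 ^+ 2 = D2 by rewrite sqr_sqrtr // ltW.
set w1 := A / Num.sqrt D1; set w2 := B / Num.sqrt D2.
have e1 : D1 * M - A ^+ 2 = D1 * (M - w1 ^+ 2).
  by rewrite /w1 expr_div_n q1; field; rewrite gt_eqF.
have e2 : D2 * M - B ^+ 2 = D2 * (M - w2 ^+ 2).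
  by rewrite /w2 expr_div_n q2; field; rewrite gt_eqF.
have m1 : 0 < M - w1 ^+ 2.
  by move: h1; rewrite e1 pmulr_rgt0.
have m2 : 0 < M - w2 ^+ 2.
  by move: h2; rewrite e2 pmulr_rgt0.
rewrite e1 e2 (sqrtrM _ (ltW d1)) (sqrtrM _ (ltW d2)).
have -> : A / (Num.sqrt D1 * Num.sqrt (M - w1 ^+ 2)) = psi M w1.
  by rewrite /psi /w1 invfM mulrA.
have -> : B / (Num.sqrt D2 * Num.sqrt (M - w2 ^+ 2)) = psi M w2.
  by rewrite /psi /w2 invfM mulrA.
rewrite psi_sum; try lra.
have -> : A * Num.sqrt D2 + B * Num.sqrt D1 = (w1 + w2) * (Num.sqrt D1 * Num.sqrt D2).
  by rewrite /w1 /w2; field; rewrite !gt_eqF.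
by rewrite pmulr_lge0 // mulr_gt0.
Qed.

Lemma cosh_ge1 {R : realType} (r : R) : 1 <= coshR r.
Proof.
rewrite coshE; have E0 := expR_gt0 r.
have hE : expR r * (expR r)^-1 = 1 by rewrite mulfV // gt_eqF.
have i0 : 0 < (expR r)^-1 by rewrite invr_gt0.
have := sqr_ge0 (expR r - 1).
have : 0 <= (expR r - 1) ^+ 2 * (expR r)^-1 by rewrite mulr_ge0 ?sqr_ge0 // ltW.
have -> : (expR r - 1) ^+ 2 * (expR r)^-1 = expR r - 2 + (expR r)^-1.
  by field; rewrite gt_eqF.
lra.
Qed.

Lemma cosh_gt0 {R : realType} (r : R) : 0 < coshR r.
Proof. have := cosh_ge1 r; lra. Qed.

Lemma sinh_gt0 {R : realType} (r : R) : 0 < r -> 0 < sinhR r.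
Proof.
move=> r0; rewrite sinhE.
have E1 : 1 < expR r by rewrite expR_gt1.
have : (expR r)^-1 < 1 by rewrite invf_lt1 //; lra.
lra.
Qed.

Lemma lor_hdist {R : realType} (p q : vec3 R) y : inH2 p -> inH2 q -> 1 <= y ->
  hdist p q = arcoshR y -> lor p q = - y.
Proof.
move=> hp hq y1 h.
have := cosh_arcosh _ (H2_lor _ _ hp hq); rewrite -/(hdist p q) h cosh_arcosh //.
lra.
Qed.

Lemma lor_orth {R : realType} (O v : vec3 R) z : inH2 O -> inH2 v ->
  coshR (hdist O v) = z -> lor O v = - z.
Proof.
move=> hO hv; rewrite /hdist cosh_arcosh; first lra.
exact: H2_lor.
Qed.

Lemma algK_r {R : realType} (ri rj rk a d e : R) :
  let xi := coshR ri in let xj := coshR rj in let xk := coshR rk in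
  let si := sinhR ri in let sj := sinhR rj in let sk := sinhR rk in
  let p := xi * xj + e * si * sj in let q := xk * xi + a * sk * si in
  let r := xj * xk + d * sj * sk in
  det33 1 p q p 1 r xi xj xk = si * sj * Lf xi xj xk si sj sk a d e.
Proof.
rewrite /= !coshE !sinhE; apply: alg_K; by rewrite gt_eqF ?expR_gt0.
Qed.

Lemma algQ_r {R : realType} (ri rj rk a d e : R) :
  let xi := coshR ri in let xj := coshR rj in let xk := coshR rk in
  let si := sinhR ri in let sj := sinhR rj in let sk := sinhR rk in
  let p := xi * xj + e * si * sj in let q := xk * xi + a * sk * si in
  let r := xj * xk + d * sj * sk in
  (e ^+ 2 - 1) * Qf xi xj xk p q r =
  Delta a d e * sk ^+ 2 * Mf xi xj si sj e - (Lf xi xj xk si sj sk a d e) ^+ 2.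
Proof.
rewrite /= !coshE !sinhE; apply: alg_Q; by rewrite gt_eqF ?expR_gt0.
Qed.

Lemma face_u {R : realType} (ri rj rk a d e rho : R) (vi vj vk O : vec3 R) :
  0 < ri -> 0 < rj -> 0 < rk -> 1 < e ->
  inH2 vi -> inH2 vj -> inH2 vk -> inH2 O ->
  let xi := coshR ri in let xj := coshR rj in let xk := coshR rk in
  let si := sinhR ri in let sj := sinhR rj in let sk := sinhR rk in
  let X := coshR rho in
  lor vi vj = - (xi * xj + e * si * sj) ->
  lor vk vi = - (xk * xi + a * sk * si) ->
  lor vj vk = - (xj * xk + d * sj * sk) ->
  lor O vi = - (xi * X) -> lor O vj = - (xj * X) -> lor O vk = - (xk * X) ->
  det3 vi vj vk != 0 ->
  let l := Lf xi xj xk si sj sk a d e / sk in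
  let M := Mf xi xj si sj e in
  0 < Delta a d e * M - l ^+ 2 /\
  det3 vi vj O * det3 vi vj vk / `|det3 vi vj vk|
  = si * sj * Num.sqrt (e ^+ 2 - 1) * (l / Num.sqrt (Delta a d e * M - l ^+ 2)).
Proof.
move=> ri0 rj0 rk0 e1 hi hj hk hO xi xj xk si sj sk X hij hki hjk hOi hOj hOk dn l M.
have hK := algK_r ri rj rk a d e; have hQ := algQ_r ri rj rk a d e.
rewrite -/xi -/xj -/xk -/si -/sj -/sk in hK hQ.
set p := xi * xj + e * si * sj in hij hK hQ.
set q := xk * xi + a * sk * si in hki hK hQ.
set r := xj * xk + d * sj * sk in hjk hK hQ.
set K := det33 1 p q p 1 r xi xj xk in hK.
set Q := Qf xi xj xk p q r in hQ.
set G := det33 1 p q p 1 r q r 1.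
have hii : lor vi vi = -1 by case: hi.
have hjj : lor vj vj = -1 by case: hj.
have hkk : lor vk vk = -1 by case: hk.
have hOO : lor O O = -1 by case: hO.
have hji : lor vj vi = - p by rewrite lorC.
have hik : lor vi vk = - q by rewrite lorC.
have hkj : lor vk vj = - r by rewrite lorC.
have hiO : lor vi O = - (xi * X) by rewrite lorC.
have hjO : lor vj O = - (xj * X) by rewrite lorC.
have hkO : lor vk O = - (xk * X) by rewrite lorC.
have g1 := gram3 vi vj O vk.
rewrite hii hij hik hji hjj hjk hOi hOj hOk gramK -/K in g1.
have g2 := gram3 vi vj vk vk.
rewrite hii hij hik hji hjj hjk hki hkj hkk gramG -/G in g2.
have g3 := gram4 vi vj vk O.
rewrite hii hij hik hiO hji hjj hjk hjO hki hkj hkk hkO hOi hOj hOk hOO gram4v -/G -/Q in g3.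
set dk := det3 vi vj vk in g1 g2 dn *.
set Dk := det3 vi vj O in g1 *.
have X0 : 0 < X by apply: cosh_gt0.
have si0 : 0 < si by apply: sinh_gt0.
have sj0 : 0 < sj by apply: sinh_gt0.
have sk0 : 0 < sk by apply: sinh_gt0.
have G0 : 0 < G by rewrite -g2 -expr2 exprn_even_gt0.
have GQ : G = X ^+ 2 * Q by lra.
have Q0 : 0 < Q.
  by move: G0; rewrite GQ pmulr_rgt0 // exprn_gt0.
have e0 : 0 < e ^+ 2 - 1 by nra.
have hQ' : Q = sk ^+ 2 * (Delta a d e * M - l ^+ 2) / (e ^+ 2 - 1).
  apply: (mulfI (x := e ^+ 2 - 1)); first by rewrite gt_eqF.
  rewrite hQ /l /M; field; rewrite !gt_eqF //.
have pos : 0 < Delta a d e * M - l ^+ 2.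
  have : 0 < Q * (e ^+ 2 - 1) / sk ^+ 2 by apply: divr_gt0; [apply: mulr_gt0|apply: exprn_gt0].
  have h : Q * (e ^+ 2 - 1) / sk ^+ 2 = Delta a d e * M - l ^+ 2.
    by rewrite hQ'; field; rewrite !gt_eqF.
  by rewrite h.
split => //.
have nd : `|dk| = X * Num.sqrt Q.
  rewrite -sqrtr_sqr expr2 g2 GQ sqrtrM ?sqr_ge0 // sqrtr_sqr ger0_norm //; lra.
have sQ : Num.sqrt Q = sk * Num.sqrt (Delta a d e * M - l ^+ 2) / Num.sqrt (e ^+ 2 - 1).
  rewrite hQ' sqrtrM; last by rewrite mulr_ge0 ?sqr_ge0 // ltW.
  rewrite sqrtrM ?sqr_ge0 // sqrtr_sqr ger0_norm ?(ltW sk0) // sqrtrV ?(ltW e0) //.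
have sD0 : 0 < Num.sqrt (Delta a d e * M - l ^+ 2) by rewrite sqrtr_gt0.
have se0 : 0 < Num.sqrt (e ^+ 2 - 1) by rewrite sqrtr_gt0.
have hK' : K = si * sj * Lf xi xj xk si sj sk a d e by exact: hK.
rewrite g1 nd sQ hK' /l.
field; rewrite !gt_eqF //.
Qed.

Lemma final_id {R : realType} (xi xj xk xl si sj sk sl a b c d e Sk Sl : R) :
  0 < xi -> 0 < xj -> 0 < xk -> 0 < xl -> 0 < si -> 0 < sj -> 0 < sk -> 0 < sl ->
  0 < e ^+ 2 - 1 ->
  Lf xi xj xk si sj sk a d e / sk * Sl + Lf xi xj xl si sj sl b c e / sl * Sk =
  si * sj * (e ^+ 2 - 1) *
  (((a + d * e) * Sl + (b + c * e) * Sk) / (e ^+ 2 - 1) / (si / xi) +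
   ((d + a * e) * Sl + (c + b * e) * Sk) / (e ^+ 2 - 1) / (sj / xj) -
   (Sl / (sk / xk) + Sk / (sl / xl))).
Proof.
move=> *; rewrite /Lf; field.
by rewrite !gt_eqF.
Qed.

Theorem mainTheorem5 (R : realType)
  (ri rj rk rl a b c d e : R) (vi vj vk vl Ok Ol : vec3 R) (rhok rhol : R) :
  0 < ri -> 0 < rj -> 0 < rk -> 0 < rl ->
  1 < a -> 1 < b -> 1 < c -> 1 < d -> 1 < e ->
  inH2 vi -> inH2 vj -> inH2 vk -> inH2 vl ->
  hdist vi vj = elen ri rj e ->
  hdist vk vi = elen rk ri a ->
  hdist vi vl = elen ri rl b ->
  hdist vl vj = elen rl rj c ->
  hdist vj vk = elen rj rk d ->
  det3 vi vj vk * det3 vi vj vl < 0 ->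
  orthCircle vi vj vk ri rj rk Ok rhok ->
  orthCircle vi vj vl ri rj rl Ol rhol ->
  let f := (a * b + c * d + a * c * e + b * d * e
            + Num.sqrt (Delta a d e) * Num.sqrt (Delta b c e)) / (e ^+ 2 - 1) in
  (0 <= hsigned vi vj vk Ok + hsigned vi vj vl Ol <->
   Num.sqrt (Delta b c e) / tanhR rk + Num.sqrt (Delta a d e) / tanhR rl
   <= Num.sqrt (Delta c d f) / tanhR ri + Num.sqrt (Delta a b f) / tanhR rj).
Proof.
move=> ri0 rj0 rk0 rl0 ha hb hc hd he hi hj hk hl dij dki dil dlj djk hside oK oL f.
move: (I1 a b c d e ha hb hc hd he) (I2 a b c d e ha hb hc hd he) => /= h1 h2.
rewrite -/f in h1 h2.
set xi := coshR ri; set xj := coshR rj; set xk := coshR rk; set xl := coshR rl.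
set si := sinhR ri; set sj := sinhR rj; set sk := sinhR rk; set sl := sinhR rl.
have xi1 : 1 <= xi by apply: cosh_ge1.
have xj1 : 1 <= xj by apply: cosh_ge1.
have xk1 : 1 <= xk by apply: cosh_ge1.
have xl1 : 1 <= xl by apply: cosh_ge1.
have si0 : 0 < si by apply: sinh_gt0.
have sj0 : 0 < sj by apply: sinh_gt0.
have sk0 : 0 < sk by apply: sinh_gt0.
have sl0 : 0 < sl by apply: sinh_gt0.
have xi0 : 0 < xi by apply: cosh_gt0.
have xj0 : 0 < xj by apply: cosh_gt0.
have xk0 : 0 < xk by apply: cosh_gt0.
have xl0 : 0 < xl by apply: cosh_gt0.
have C1 : forall (x y s t I : R), 1 <= x -> 1 <= y -> 0 < s -> 0 < t -> 1 < I -> 1 < x * y + I * s * t.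
  move=> x y s t I hx hy hs ht hI.
  have : 1 <= x * y by rewrite -[1]mul1r ler_pM //; lra.
  have : 0 < I * s * t by rewrite !mulr_gt0 //; lra.
  lra.
have hij : lor vi vj = - (xi * xj + e * si * sj).
  by apply: lor_hdist => //; apply/ltW/C1.
have hki : lor vk vi = - (xk * xi + a * sk * si).
  by apply: lor_hdist => //; apply/ltW/C1.
have hjk : lor vj vk = - (xj * xk + d * sj * sk).
  by apply: lor_hdist => //; apply/ltW/C1.
have hli : lor vl vi = - (xl * xi + b * sl * si).
  rewrite lorC; have -> : xl * xi + b * sl * si = xi * xl + b * si * sl by ring.
  by apply: lor_hdist => //; apply/ltW/C1.
have hjl : lor vj vl = - (xj * xl + c * sj * sl).
  rewrite lorC; have -> : xj * xl + c * sj * sl = xl * xj + c * sl * sj by ring.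
  by apply: lor_hdist => //; apply/ltW/C1.
case: oK => hOk _ oki okj okk.
case: oL => hOl _ oli olj oll.
have dk0 : det3 vi vj vk != 0 by apply/eqP => h; move: hside; rewrite h mul0r ltxx.
have dl0 : det3 vi vj vl != 0 by apply/eqP => h; move: hside; rewrite h mulr0 ltxx.
have w0 : 0 < lor (Wv vi vj) (Wv vi vj).
  rewrite W_W hij; case: hi => -> _; case: hj => -> _.
  have := C1 _ _ _ _ _ xi1 xj1 si0 sj0 he; nra.
rewrite (hsigned_G vi vj vk Ok hi hj hOk w0 dk0) (hsigned_G vi vj vl Ol hi hj hOl w0 dl0) Gf_sum //.
have [posk uk] := face_u ri rj rk a d e rhok vi vj vk Ok ri0 rj0 rk0 he hi hj hk hOk hij hki hjk
  (lor_orth _ _ _ hOk hi oki) (lor_orth _ _ _ hOk hj okj) (lor_orth _ _ _ hOk hk okk) dk0.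
have [posl ul] := face_u ri rj rl b c e rhol vi vj vl Ol ri0 rj0 rl0 he hi hj hl hOl hij hli hjl
  (lor_orth _ _ _ hOl hi oli) (lor_orth _ _ _ hOl hj olj) (lor_orth _ _ _ hOl hl oll) dl0.
rewrite uk ul -/xi -/xj -/xk -/xl -/si -/sj -/sk -/sl.
have c00 : 0 < si * sj * Num.sqrt (e ^+ 2 - 1).
  have : 0 < Num.sqrt (e ^+ 2 - 1) by rewrite sqrtr_gt0; nra.
  by move=> h; apply: mulr_gt0 => //; apply: mulr_gt0.
rewrite -mulrDr pmulr_rge0 //.
rewrite GL; last 4 first.
- by apply: Delta_gt0.
- by apply: Delta_gt0.
- exact: posk.
- exact: posl.
set Sk := Num.sqrt (Delta a d e); set Sl := Num.sqrt (Delta b c e).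
set Scdf := Num.sqrt (Delta c d f) in h1 *; set Sabf := Num.sqrt (Delta a b f) in h2 *.
have e0 : 0 < e ^+ 2 - 1 by move: he; clear; move=> he; nra.
have E1 : Scdf = ((a + d * e) * Sl + (b + c * e) * Sk) / (e ^+ 2 - 1).
  by rewrite h1; field; rewrite gt_eqF.
have E2 : Sabf = ((d + a * e) * Sl + (c + b * e) * Sk) / (e ^+ 2 - 1).
  by rewrite h2; field; rewrite gt_eqF.
have -> : Lf xi xj xk si sj sk a d e / sk * Sl + Lf xi xj xl si sj sl b c e / sl * Sk
  = si * sj * (e ^+ 2 - 1) *
    ((Scdf / tanhR ri + Sabf / tanhR rj) - (Sl / tanhR rk + Sk / tanhR rl)).
  rewrite E1 E2 /tanhR -/xi -/xj -/xk -/xl -/si -/sj -/sk -/sl.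
  by apply: final_id.
have pp : 0 < si * sj * (e ^+ 2 - 1) by apply: mulr_gt0 => //; apply: mulr_gt0.
by rewrite pmulr_rge0 // subr_ge0.
Qed.
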